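(* Let $m,n\in\mathbb{N}$ be coprime with $1\le m\le n-1$, and let $\Gamma$ be a $\mathbb{D}_n$-symmetric billiard curve with equivariant parametrization $\gamma$. An $n$-periodic billiard sequence $Z\in\Gamma^{\mathbb{Z}}$ of rotation number $\frac mn$ is $\mathbb{D}_n$-symmetric if and only if it has a lift of the form $$X_i=\frac{A}{2n}+\frac mn i\quad\text{for some }A\in\mathbb{Z}.$$ Every such sequence is a billiard orbit. Two such orbits are geometrically equal if and only if their lifts of this form differ by an integer multiple of $\frac1n$. In particular, $\Gamma$ has exactly two geometrically distinct $n$-periodic $\mathbb{D}_n$-symmetric Birkhoff billiard orbits of rotation number $\frac mn$.
   Context: $\mathbb{D}_n=\langle R,S\rangle$, where $R$ is counterclockwise rotation by $2\pi/n$ and $S$ is the horizontal reflection. $\Gamma$ is a $C^2$ simple closed $\mathbb{D}_n$-invariant curve bounding a strictly convex domain, parametrized counterclockwise by a $1$-periodic $C^2$ immersion $\gamma$ descending to an embedding of $\mathbb{R}/\mathbb{Z}$, with $\gamma(x+1/n)=R\gamma(x)$ and $\gamma(-x)=S\gamma(x)$. A billiard sequence has $Z_i\ne Z_{i+1}$, with lift $X$ ($\gamma(X_i)=Z_i$, $0<X_{i+1}-X_i<1$). A billiard orbit satisfies the reflection law at each point. $Z$ is $\mathbb{D}_n$-symmetric if every $g\in\mathbb{D}_n$ satisfies, for some $k$, $g(Z_i)=Z_{k+i}$ for all $i$ or $g(Z_i)=Z_{k-i}$ for all $i$. Birkhoff means the lift satisfies $X_i\le X_j+l\Rightarrow X_{i+m}\le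 X_{j+m}+l$ for all integers. $Z,Z'$ are geometrically equal if for some $k$, $Z_i=Z'_{k+i}$ for all $i$ or $Z_i=Z'_{k-i}$ for all $i$; otherwise they are geometrically distinct. *)

(* Defs.v *)
From Stdlib Require Import Reals ZArith Arith.
From Coquelicot Require Import Coquelicot.
Open Scope R_scope.

Definition pt := (R * R)%type.

Definition padd (p q : pt) : pt := (fst p + fst q, snd p + snd q).
Definition psub (p q : pt) : pt := (fst p - fst q, snd p - snd q).
Definition pscal (s : R) (p : pt) : pt := (s * fst p, s * snd p).
Definition pdot (p q : pt) : R := fst p * fst q + snd p * snd q.
Definition pnorm (p : pt) : R := sqrt (fst p * fst p + snd p * snd p).
Definition pdist (p q : pt) : R := pnorm (psub p q).
Definition pJ (p : pt) : pt := (- snd p, fst p).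

Definition rot (th : R) (p : pt) : pt :=
  (cos th * fst p - sin th * snd p, sin th * fst p + cos th * snd p).
Definition Rn (n : nat) : pt -> pt := rot (2 * PI / INR n).
Definition Sref (p : pt) : pt := (fst p, - snd p).

(* D_n = <R, S>: the set of maps generated by R and S under composition
   (R^n = S^2 = id, so the generated monoid is the generated group). *)
Inductive in_Dn (n : nat) : (pt -> pt) -> Prop :=
| Dn_id : in_Dn n (fun p => p)
| Dn_R : forall g, in_Dn n g -> in_Dn n (fun p => Rn n (g p))
| Dn_S : forall g, in_Dn n g -> in_Dn n (fun p => Sref (g p)).

Definition interior (K : pt -> Prop) (p : pt) : Prop :=
  exists eps, 0 < eps /\ forall q, pdist p q < eps -> K q.
Definition closure (K : pt -> Prop) (p : pt) : Prop :=
  forall eps, 0 < eps -> exists q, K q /\ pdist p q < eps.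
Definition boundary (K : pt -> Prop) (p : pt) : Prop :=
  closure K p /\ ~ interior K p.

Definition gx (g : R -> pt) (x : R) : R := fst (g x).
Definition gy (g : R -> pt) (x : R) : R := snd (g x).

Definition C2 (f : R -> R) : Prop :=
  (forall x, ex_derive f x) /\
  (forall x, ex_derive (Derive f) x) /\
  (forall x, continuous (Derive (Derive f)) x).

Definition dgamma (g : R -> pt) (x : R) : pt :=
  (Derive (gx g) x, Derive (gy g) x).

(* Gamma = image of g bounds a strictly convex (open, bounded) domain Omega,
   and g runs counterclockwise (Omega lies to the left of the velocity). *)
Definition bounds_strictly_convex_ccw (g : R -> pt) : Prop :=
  exists Omega : pt -> Prop,
    (forall p, Omega p -> interior Omega p) /\
    (exists M, forall p, Omega p -> pnorm p <= M) /\
    (forall p, boundary Omega p <-> exists x, g x = p) /\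
    (forall p q t, closure Omega p -> closure Omega q -> p <> q ->
        0 < t < 1 -> Omega (padd (pscal (1 - t) p) (pscal t q))) /\
    (forall x, exists eps, 0 < eps /\
        forall s, 0 < s < eps -> Omega (padd (g x) (pscal s (pJ (dgamma g x))))).

Definition Dn_billiard_curve (n : nat) (g : R -> pt) : Prop :=
  C2 (gx g) /\ C2 (gy g) /\
  (forall x, dgamma g x <> (0, 0)) /\
  (* 1-periodic and descends to an embedding of R/Z *)
  (forall x y, g x = g y <-> exists k : Z, x - y = IZR k) /\
  bounds_strictly_convex_ccw g /\
  (forall x, g (x + / INR n) = Rn n (g x)) /\
  (forall x, g (- x) = Sref (g x)).

Definition on_curve (g : R -> pt) (p : pt) : Prop := exists x, g x = p.

Definition billiard_seq (g : R -> pt) (Zs : Z -> pt) : Prop :=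
  (forall i, on_curve g (Zs i)) /\ (forall i, Zs i <> Zs (i + 1)%Z).

Definition is_lift (g : R -> pt) (Zs : Z -> pt) (X : Z -> R) : Prop :=
  forall i, g (X i) = Zs i /\ 0 < X (i + 1)%Z - X i < 1.

Definition unitv (p : pt) : pt := pscal (/ pnorm p) p.

(* reflection law at every point: the unit vectors towards the previous and
   next points make equal angles with the tangent line *)
Definition billiard_orbit (g : R -> pt) (Zs : Z -> pt) : Prop :=
  billiard_seq g Zs /\
  forall i x, g x = Zs i ->
    pdot (padd (unitv (psub (Zs (i - 1)%Z) (Zs i)))
               (unitv (psub (Zs (i + 1)%Z) (Zs i))))
         (dgamma g x) = 0.

Definition n_periodic (n : nat) (Zs : Z -> pt) : Prop :=
  forall i, Zs (i + Z.of_nat n)%Z = Zs i.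

Definition rotation_number (g : R -> pt) (Zs : Z -> pt) (rho : R) : Prop :=
  exists X, is_lift g Zs X /\
    is_lim_seq (fun k : nat => X (Z.of_nat k) / INR k) rho.

Definition Dn_symmetric (n : nat) (Zs : Z -> pt) : Prop :=
  forall g, in_Dn n g -> exists k : Z,
    (forall i, g (Zs i) = Zs (k + i)%Z) \/ (forall i, g (Zs i) = Zs (k - i)%Z).

Definition Birkhoff (g : R -> pt) (Zs : Z -> pt) : Prop :=
  exists X, is_lift g Zs X /\
    forall i j m l : Z, X i <= X j + IZR l -> X (i + m)%Z <= X (j + m)%Z + IZR l.

Definition geom_equal (Zs Zs' : Z -> pt) : Prop :=
  exists k : Z, (forall i, Zs i = Zs' (k + i)%Z) \/ (forall i, Zs i = Zs' (k - i)%Z).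

Definition sym_lift (n m : nat) (A : Z) : Z -> R :=
  fun i => IZR A / (2 * INR n) + INR m / INR n * IZR i.

Definition nm_seq (g : R -> pt) (n m : nat) (Zs : Z -> pt) : Prop :=
  billiard_seq g Zs /\ n_periodic n Zs /\ rotation_number g Zs (INR m / INR n).

(* Main.v *)
Require Import Defs.
From Stdlib Require Import Reals ZArith Arith Lia Lra Znumtheory.
From Coquelicot Require Import Coquelicot.
Open Scope R_scope.

Definition isInt (r : R) : Prop := exists k : Z, r = IZR k.

Lemma isInt_small r : isInt r -> -1 < r < 1 -> r = 0.
Proof.
  intros [k ->] [h1 h2].
  assert (-1 < k)%Z by (apply lt_IZR; lra).
  assert (k < 1)%Z by (apply lt_IZR; lra).
  assert (k = 0)%Z by lia. subst; reflexivity.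
Qed.

Lemma const_Z (f : Z -> R) : (forall i, f (i+1)%Z = f i) -> forall i, f i = f 0%Z.
Proof.
  intros H i. induction i using Z.peano_ind.
  - reflexivity.
  - rewrite <- Z.add_1_r, H; auto.
  - rewrite <- IHi. rewrite <- (H (Z.pred i)). f_equal. lia.
Qed.

Lemma shift_iter (X : Z -> R) (s : Z) (c : R) :
  (forall i, X (i + s)%Z = X i + c) -> forall j i, X (i + j * s)%Z = X i + IZR j * c.
Proof.
  intros H j. induction j using Z.peano_ind; intro i.
  - rewrite Z.mul_0_l, Z.add_0_r. simpl. ring.
  - replace (i + Z.succ j * s)%Z with ((i + j*s) + s)%Z by (rewrite Z.mul_succ_l; ring).
    rewrite H, IHj, succ_IZR. ring.
  - replace (Z.pred j) with (j - 1)%Z by lia.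
    specialize (H (i + (j - 1) * s)%Z).
    replace (i + (j - 1) * s + s)%Z with (i + j * s)%Z in H by ring.
    rewrite IHj in H.
    rewrite minus_IZR. replace ((IZR j - 1) * c) with (IZR j * c - c) by ring. lra.
Qed.

Lemma IZR_INR n : INR n = IZR (Z.of_nat n).
Proof. apply INR_IZR_INZ. Qed.

Definition gamma_eq (g : R -> pt) := forall x y, g x = g y <-> exists k : Z, x - y = IZR k.

Lemma lift_step g Zs X : is_lift g Zs X -> forall i, 0 < X (i+1)%Z - X i < 1.
Proof. intros h i; apply (h i). Qed.

Lemma period_lift (n : nat) g Zs X : gamma_eq g -> is_lift g Zs X -> n_periodic n Zs ->
  exists p : Z, forall i, X (i + Z.of_nat n)%Z = X i + IZR p.
Proof.
  intros hg hl hp.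
  assert (hi : forall i, isInt (X (i + Z.of_nat n)%Z - X i)).
  { intro i. apply hg. destruct (hl (i + Z.of_nat n)%Z) as [h1 _].
    destruct (hl i) as [h2 _]. rewrite h1, h2. apply hp. }
  set (f := fun i => X (i + Z.of_nat n)%Z - X i).
  assert (hf : forall i, f (i+1)%Z = f i).
  { intro i. apply Rminus_diag_uniq. apply isInt_small.
    - destruct (hi (i+1)%Z) as [a ha]; destruct (hi i) as [b hb].
      exists (a - b)%Z. unfold f. rewrite minus_IZR, <- ha, <- hb. ring.
    - unfold f. pose proof (lift_step _ _ _ hl (i + Z.of_nat n)%Z) as h1.
      pose proof (lift_step _ _ _ hl i) as h2.
      replace (i + Z.of_nat n + 1)%Z with (i + 1 + Z.of_nat n)%Z in h1 by ring.
      lra. }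
  destruct (hi 0%Z) as [p hp0]. exists p. intro i.
  pose proof (const_Z f hf i) as e. unfold f in e. rewrite hp0 in e. lra.
Qed.

Lemma rot_lim (n m : nat) (X : Z -> R) (p : Z) : (1 <= n)%nat ->
  (forall i, X (i + Z.of_nat n)%Z = X i + IZR p) ->
  is_lim_seq (fun k : nat => X (Z.of_nat k) / INR k) (INR m / INR n) ->
  IZR p = INR m.
Proof.
  intros hn hper hlim.
  assert (hn0 : INR n <> 0) by (apply not_0_INR; lia).
  assert (hit := shift_iter X _ _ hper).
  assert (hinc : forall k, (k * n < S k * n)%nat) by (intro k; simpl; lia).
  assert (hsub := is_lim_seq_subseq _ _ (fun k => (k * n)%nat)
     (eventually_subseq _ hinc) hlim).
  simpl in hsub.
  assert (L1 : is_lim_seq (fun k => / INR k) 0).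
  { pose proof (is_lim_seq_inv _ _ is_lim_seq_INR) as h. simpl in h. apply h. discriminate. }
  assert (L2 : is_lim_seq (fun k => X 0%Z / INR n * / INR k + IZR p / INR n) (X 0%Z / INR n * 0 + IZR p / INR n)).
  { apply is_lim_seq_plus'. 2: apply is_lim_seq_const.
    pose proof (is_lim_seq_scal_l _ (X 0%Z / INR n) _ L1) as h. simpl in h. exact h. }
  assert (L3 : is_lim_seq (fun k => X (Z.of_nat (k * n)) / INR (k * n)) (IZR p / INR n)).
  { replace (IZR p / INR n) with (X 0%Z / INR n * 0 + IZR p / INR n) by ring.
    apply (is_lim_seq_ext_loc _ _ _ ) with (2 := L2).
    exists 1%nat. intros k hk.
    assert (hk0 : INR k <> 0) by (apply not_0_INR; lia).
    rewrite Nat2Z.inj_mul, mult_INR.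
    pose proof (hit (Z.of_nat k) 0%Z) as e. simpl in e. rewrite e.
    rewrite <- INR_IZR_INZ. field. split; auto. }
  apply is_lim_seq_unique in L3. apply is_lim_seq_unique in hsub.
  rewrite L3 in hsub. injection hsub as hs.
  apply (Rmult_eq_reg_r (/ INR n)); [exact hs | apply Rinv_neq_0_compat; exact hn0].
Qed.

Lemma step_plus (n m : nat) (X : Z -> R) (k : Z) : (1 <= n)%nat ->
  (forall i, 0 < X (i+1)%Z - X i < 1) ->
  (forall i, X (i + Z.of_nat n)%Z = X i + INR m) ->
  (forall i, isInt (X (k + i)%Z - X i - / INR n)) ->
  forall i, X (i+1)%Z = X i + INR m / INR n.
Proof.
  intros hn hb hper hk.
  assert (hn0 : INR n <> 0) by (apply not_0_INR; lia).
  set (e := fun i => X (k + i)%Z - X i - / INR n).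
  assert (he : forall i, e (i+1)%Z = e i).
  { intro i. apply Rminus_diag_uniq. apply isInt_small.
    - destruct (hk (i+1)%Z) as [a ha]; destruct (hk i) as [b hb'].
      exists (a - b)%Z. unfold e. rewrite minus_IZR, <- ha, <- hb'. ring.
    - unfold e. pose proof (hb (k + i)%Z) as h1. pose proof (hb i) as h2.
      replace (k + i + 1)%Z with (k + (i + 1))%Z in h1 by ring. lra. }
  destruct (hk 0%Z) as [E hE].
  assert (hk' : forall i, X (i + k)%Z = X i + (IZR E + / INR n)).
  { intro i. pose proof (const_Z e he i) as h. unfold e in h. rewrite hE in h.
    rewrite Z.add_comm. lra. }
  pose proof (shift_iter _ _ _ hk') as I1.
  pose proof (shift_iter _ _ _ hper) as I2.
  assert (hz : (Z.of_nat n * E + 1 = k * Z.of_nat m)%Z).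
  { pose proof (I1 (Z.of_nat n) 0%Z) as a. pose proof (I2 k 0%Z) as b.
    replace (0 + k * Z.of_nat n)%Z with (0 + Z.of_nat n * k)%Z in b by ring.
    rewrite a in b. apply eq_IZR. rewrite plus_IZR, !mult_IZR.
    rewrite <- !INR_IZR_INZ in *. simpl.
    replace (INR n * IZR E + 1) with (INR n * (IZR E + / INR n)) by (field; auto).
    lra. }
  intro i.
  pose proof (I1 (Z.of_nat m) i) as a. pose proof (I2 E (i+1)%Z) as b.
  replace (i + Z.of_nat m * k)%Z with (i + 1 + E * Z.of_nat n)%Z in a by lia.
  rewrite a in b. rewrite <- INR_IZR_INZ in b.
  replace (INR m / INR n) with (INR m * (IZR E + / INR n) - IZR E * INR m) by (field; auto).
  lra.
Qed.

Lemma step_minus (n m : nat) (X : Z -> R) (k : Z) : (2 <= n)%nat -> (1 <= m <= n - 1)%nat ->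
  (forall i, 0 < X (i+1)%Z - X i < 1) ->
  (forall i, X (i + Z.of_nat n)%Z = X i + INR m) ->
  (forall i, isInt (X (k - i)%Z - X i - / INR n)) ->
  forall i, X (i+1)%Z = X i + INR m / INR n.
Proof.
  intros hn hm hb hper hk.
  assert (hn2 : n = 2%nat).
  { destruct (hk 0%Z) as [a ha]. destruct (hk (k - 0)%Z) as [b hb'].
    replace (k - (k - 0))%Z with 0%Z in hb' by ring.
    assert (hs : - (2 / INR n) = IZR (a + b)) by (rewrite plus_IZR; lra).
    assert (hnr : 2 <= INR n) by (replace 2 with (INR 2) by (simpl; ring); apply le_INR; lia).
    assert (0 < 2 / INR n <= 1).
    { split. apply Rdiv_lt_0_compat; lra.
      apply (Rmult_le_reg_r (INR n)); [lra|]. unfold Rdiv. rewrite Rmult_assoc, Rinv_l; lra. }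
    assert (-1 <= IZR (a+b) < 0) by lra.
    assert (a + b = -1)%Z.
    { destruct H0 as [h1 h2]. apply le_IZR in h1. apply lt_IZR in h2. lia. }
    rewrite H1 in hs.
    assert (INR n = 2).
    { assert (2 / INR n = 1) by (simpl in hs; lra).
      apply (Rmult_eq_reg_r (/ INR n)). 2: apply Rinv_neq_0_compat; lra.
      rewrite Rinv_r by lra. unfold Rdiv in H2. lra. }
    replace 2 with (INR 2) in H2 by (simpl; ring). apply INR_eq in H2. exact H2. }
  subst n. assert (m = 1%nat) by lia. subst m.
  pose proof (shift_iter _ _ _ hper) as I2. simpl in I2.
  intro i. simpl.
  pose proof (Z.div_mod (k - 2 * i) 2 ltac:(lia)) as dm.
  pose proof (Z.mod_pos_bound (k - 2 * i) 2 ltac:(lia)) as mb.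
  set (t := ((k - 2*i) / 2)%Z) in *. set (r := ((k - 2*i) mod 2)%Z) in *.
  destruct (hk i) as [z hz].
  assert (r = 0 \/ r = 1)%Z as [hr|hr] by lia.
  - exfalso. replace (k - i)%Z with (i + t * 2)%Z in hz by lia.
    rewrite I2 in hz.
    assert (IZR (2 * z) = IZR (2 * t - 1)).
    { rewrite mult_IZR, minus_IZR, mult_IZR. simpl in hz. simpl. lra. }
    apply eq_IZR in H. lia.
  - replace (k - i)%Z with (i + 1 + t * 2)%Z in hz by lia.
    rewrite I2 in hz. simpl in hz.
    assert (X (i+1)%Z - X i - / 2 = 0).
    { apply isInt_small. exists (z - t)%Z. rewrite minus_IZR. lra.
      pose proof (hb i). lra. }
    lra.
Qed.

Lemma forward (n m : nat) (g : R -> pt) (Zs : Z -> pt) : (2 <= n)%nat -> (1 <= m <= n - 1)%nat ->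
  gamma_eq g -> (forall x, g (x + / INR n) = Defs.Rn n (g x)) -> (forall x, g (- x) = Sref (g x)) ->
  n_periodic n Zs -> rotation_number g Zs (INR m / INR n) -> Dn_symmetric n Zs ->
  exists A : Z, is_lift g Zs (sym_lift n m A).
Proof.
  intros hn hm hg hR hS hp [X [hl hlim]] hsym.
  assert (hn0 : INR n <> 0) by (apply not_0_INR; lia).
  destruct (period_lift n g Zs X hg hl hp) as [p hper].
  assert (hpm : IZR p = INR m) by (apply (rot_lim n m X p); auto; lia).
  rewrite hpm in hper.
  assert (hb := lift_step _ _ _ hl).
  assert (hstep : forall i, X (i+1)%Z = X i + INR m / INR n).
  { destruct (hsym _ (Dn_R n _ (Dn_id n))) as [k [H|H]]; cbv beta in H.
    - apply (step_plus n m X k); auto; try lia.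
      intro i. unfold isInt. replace (X (k+i)%Z - X i - / INR n) with (X (k+i)%Z - (X i + / INR n)) by ring.
      apply hg. rewrite hR. destruct (hl (k+i)%Z) as [h1 _]. destruct (hl i) as [h2 _].
      rewrite h1, h2. symmetry. apply H.
    - apply (step_minus n m X k); auto.
      intro i. unfold isInt. replace (X (k-i)%Z - X i - / INR n) with (X (k-i)%Z - (X i + / INR n)) by ring.
      apply hg. rewrite hR. destruct (hl (k-i)%Z) as [h1 _]. destruct (hl i) as [h2 _].
      rewrite h1, h2. symmetry. apply H. }
  assert (hX : forall i, X i = X 0%Z + IZR i * (INR m / INR n)).
  { intro i. pose proof (shift_iter _ _ _ hstep i 0%Z) as h.
    rewrite Z.mul_1_r in h. exact h. }
  assert (hk : exists k, g (- X 0%Z) = g (X k)).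
  { destruct (hsym _ (Dn_S n _ (Dn_id n))) as [k [H|H]]; cbv beta in H.
    - exists (k + 0)%Z. rewrite hS. destruct (hl (k+0)%Z) as [h1 _]. destruct (hl 0%Z) as [h2 _].
      rewrite h1, h2. apply H.
    - exists (k - 0)%Z. rewrite hS. destruct (hl (k-0)%Z) as [h1 _]. destruct (hl 0%Z) as [h2 _].
      rewrite h1, h2. apply H. }
  destruct hk as [k hk]. apply hg in hk. destruct hk as [J hJ].
  rewrite (hX k) in hJ.
  exists (- (J * Z.of_nat n + k * Z.of_nat m))%Z.
  assert (he : forall i, sym_lift n m (- (J * Z.of_nat n + k * Z.of_nat m))%Z i = X i).
  { intro i. unfold sym_lift. rewrite (hX i).
    rewrite opp_IZR, plus_IZR, !mult_IZR, <- !INR_IZR_INZ.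
    assert (X 0%Z = - (IZR J + IZR k * (INR m / INR n)) / 2) by lra.
    rewrite H. field. auto. }
  intro i. rewrite !he. apply hl.
Qed.

Lemma bezout_mn (m n : nat) : (1 <= m)%nat -> Nat.gcd m n = 1%nat ->
  exists u v : Z, (u * Z.of_nat m + v * Z.of_nat n = 1)%Z.
Proof.
  intros hm hgcd. destruct (Nat.gcd_bezout_pos m n ltac:(lia)) as [a [b h]].
  rewrite hgcd in h. exists (Z.of_nat a), (- Z.of_nat b)%Z. nia.
Qed.

Lemma backward (n m : nat) (g : R -> pt) (Zs : Z -> pt) (A : Z) : (1 <= n)%nat -> (1 <= m)%nat ->
  Nat.gcd m n = 1%nat ->
  gamma_eq g -> (forall x, g (x + / INR n) = Defs.Rn n (g x)) -> (forall x, g (- x) = Sref (g x)) ->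
  (forall i, g (sym_lift n m A i) = Zs i) -> Dn_symmetric n Zs.
Proof.
  intros hn hm hgcd hg hR hS hZ.
  assert (hn0 : INR n <> 0) by (apply not_0_INR; lia).
  destruct (bezout_mn m n hm hgcd) as [u [v huv]].
  assert (huvR : IZR u * INR m + IZR v * INR n = 1).
  { rewrite !INR_IZR_INZ, <- !mult_IZR, <- plus_IZR, huv. reflexivity. }
  assert (hv : IZR v = (1 - IZR u * INR m) / INR n).
  { apply (Rmult_eq_reg_r (INR n)); auto. unfold Rdiv. rewrite Rmult_assoc, Rinv_l by auto. lra. }
  assert (HR : forall j, Defs.Rn n (Zs j) = Zs (j + u)%Z).
  { intro j. rewrite <- !hZ, <- hR. apply hg. exists v.
    unfold sym_lift. rewrite plus_IZR.
    rewrite hv.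
    change RinvImpl.Rinv with Rinv. field. auto. }
  assert (HS : forall j, Sref (Zs j) = Zs (- (A * u) - j)%Z).
  { intro j. rewrite <- !hZ, <- hS. apply hg. exists (- (A * v))%Z.
    unfold sym_lift. rewrite !minus_IZR, !opp_IZR, !mult_IZR.
    rewrite hv.
    field. auto. }
  intros f hf. induction hf as [|f hf IH|f hf IH].
  - exists 0%Z. left. intro i. rewrite Z.add_0_l. reflexivity.
  - destruct IH as [k [H|H]]; exists (k + u)%Z; [left|right]; intro i; rewrite H, HR; f_equal; ring.
  - destruct IH as [k [H|H]]; exists (- (A * u) - k)%Z; [right|left]; intro i; rewrite H, HS; f_equal; ring.
Qed.

Lemma sym_diff n m A A' i : INR n <> 0 ->
  sym_lift n m A i - sym_lift n m A' i = (IZR A - IZR A') / (2 * INR n).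
Proof. intro h. unfold sym_lift. field. auto. Qed.

Lemma geom_iff (n m : nat) (g : R -> pt) (Zs Zs' : Z -> pt) (A A' : Z) :
  (1 <= n)%nat -> (1 <= m)%nat -> Nat.gcd m n = 1%nat -> gamma_eq g ->
  (forall i, g (sym_lift n m A i) = Zs i) -> (forall i, g (sym_lift n m A' i) = Zs' i) ->
  (geom_equal Zs Zs' <->
   exists k : Z, forall i, sym_lift n m A i - sym_lift n m A' i = IZR k / INR n).
Proof.
  intros hn hm hgcd hg hZ hZ'.
  assert (hn0 : INR n <> 0) by (apply not_0_INR; lia).
  split.
  - intros [k H].
    assert (hk : exists k', g (sym_lift n m A 0%Z) = g (sym_lift n m A' k')).
    { destruct H as [H|H]; [exists (k+0)%Z | exists (k-0)%Z]; rewrite hZ, hZ'; apply H. }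
    destruct hk as [k' hk]. apply hg in hk. destruct hk as [J hJ].
    exists (J * Z.of_nat n + k' * Z.of_nat m)%Z. intro i. rewrite sym_diff by auto.
    rewrite plus_IZR, !mult_IZR, <- !INR_IZR_INZ.
    unfold sym_lift in hJ. simpl in hJ.
    apply (Rmult_eq_reg_r (INR n)); auto.
    replace (IZR J * INR n + IZR k' * INR m) with ((IZR J + IZR k' * (INR m / INR n)) * INR n) by (field; auto).
    rewrite <- hJ. field. auto.
  - intros [K HK].
    destruct (bezout_mn m n hm hgcd) as [u [v huv]].
    assert (huvR : IZR u * INR m + IZR v * INR n = 1).
    { rewrite !INR_IZR_INZ, <- !mult_IZR, <- plus_IZR, huv. reflexivity. }
    assert (hv : IZR v = (1 - IZR u * INR m) / INR n).
    { apply (Rmult_eq_reg_r (INR n)); auto. unfold Rdiv. rewrite Rmult_assoc, Rinv_l by auto. lra. }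
    exists (K * u)%Z. left. intro i. rewrite <- hZ, <- hZ'. apply hg.
    exists (K * v)%Z. pose proof (HK i) as h. rewrite sym_diff in h by auto.
    unfold sym_lift in *. rewrite mult_IZR, hv, plus_IZR, mult_IZR.
    apply (Rmult_eq_reg_r (INR n)); auto.
    replace ((IZR A / (2 * INR n) + INR m / INR n * IZR i -
       (IZR A' / (2 * INR n) + INR m / INR n * (IZR K * IZR u + IZR i))) * INR n)
     with (((IZR A - IZR A') / (2 * INR n)) * INR n - INR m * IZR K * IZR u) by (field; auto).
    rewrite h. field. auto.
Qed.

Definition Lr (th : R) (p : pt) : pt :=
  (cos th * fst p + sin th * snd p, sin th * fst p - cos th * snd p).

Lemma refl_formula (n : nat) (g : R -> pt) : INR n <> 0 ->
  (forall x, g (x + / INR n) = Defs.Rn n (g x)) -> (forall x, g (- x) = Sref (g x)) ->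
  forall (N : nat) y, g (INR N / INR n - y) = Lr (INR N * (2 * PI / INR n)) (g y).
Proof.
  intros hn0 hR hS N. induction N as [|N IH]; intro y.
  - replace (INR 0 / INR n - y) with (- y) by (simpl; field; auto).
    rewrite hS. unfold Lr, Sref. simpl. rewrite Rmult_0_l, cos_0, sin_0.
    destruct (g y) as [a b]; simpl. f_equal; ring.
  - replace (INR (S N) / INR n - y) with ((INR N / INR n - y) + / INR n) by (rewrite S_INR; field; auto).
    rewrite hR, IH. rewrite S_INR. unfold Defs.Rn, rot, Lr. simpl.
    replace ((INR N + 1) * (2 * PI / INR n)) with (2 * PI / INR n + INR N * (2 * PI / INR n)) by ring.
    rewrite cos_plus, sin_plus. f_equal; ring.
Qed.

Lemma alg_refl c s a b t1 t2 : c * c + s * s = 1 -> c * t1 + s * t2 = - t1 -> s * t1 - c * t2 = - t2 ->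
  pdot (padd (unitv (a, b)) (unitv (c * a + s * b, s * a - c * b))) (t1, t2) = 0.
Proof.
  intros h0 h1 h2.
  assert (hn : pnorm (c * a + s * b, s * a - c * b) = pnorm (a, b)).
  { unfold pnorm; simpl. f_equal.
    replace ((c * a + s * b) * (c * a + s * b) + (s * a - c * b) * (s * a - c * b))
      with ((c * c + s * s) * (a * a + b * b)) by ring. rewrite h0. ring. }
  unfold unitv. rewrite hn. unfold pdot, padd, pscal; simpl.
  set (r := / pnorm (a, b)).
  replace (r * a + r * (c * a + s * b)) with (r * a + r * (c * a + s * b)) by reflexivity.
  replace ((r * a + r * (c * a + s * b)) * t1 + (r * b + r * (s * a - c * b)) * t2)
    with (r * (a * t1 + b * t2 + a * (c * t1 + s * t2) + b * (s * t1 - c * t2))) by ring.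
  rewrite h1, h2. ring.
Qed.

Lemma Derive_refl (f : R -> R) x : (forall y, ex_derive f y) ->
  Derive (fun y => f (2*x - y)) x = - Derive f x.
Proof.
intros hf.
pose proof (is_derive_minus (fun _ => 2 * x) (fun y => y) x _ _ (is_derive_const _ x) (is_derive_id x)) as hi.
pose proof (is_derive_comp f (fun y => 2 * x - y) x _ _ (Derive_correct _ _ (hf (2 * x - x))) hi) as hc.
apply is_derive_unique in hc.
etransitivity; [exact hc|].
replace (2 * x - x) with x by ring.
unfold scal, minus, zero, one, plus, opp; simpl. unfold mult; simpl. ring.
Qed.
Lemma Derive_lin (f h : R -> R) c s x : (forall y, ex_derive f y) -> (forall y, ex_derive h y) ->
  Derive (fun y => c * f y + s * h y) x = c * Derive f x + s * Derive h x.
Proof.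
intros hf hh.
pose proof (is_derive_scal _ x c _ (Derive_correct _ x (hf x))) as a.
pose proof (is_derive_scal _ x s _ (Derive_correct _ x (hh x))) as b.
pose proof (is_derive_plus _ _ x _ _ a b) as d. apply is_derive_unique in d. exact d.
Qed.
Lemma Derive_lin2 (f h : R -> R) c s x : (forall y, ex_derive f y) -> (forall y, ex_derive h y) ->
  Derive (fun y => c * f y - s * h y) x = c * Derive f x - s * Derive h x.
Proof.
intros hf hh.
pose proof (is_derive_scal _ x c _ (Derive_correct _ x (hf x))) as a.
pose proof (is_derive_scal _ x s _ (Derive_correct _ x (hh x))) as b.
pose proof (is_derive_minus _ _ x _ _ a b) as d. apply is_derive_unique in d. exact d.
Qed.

Lemma reflect (n m : nat) (g : R -> pt) (Zs : Z -> pt) (A : Z) : (1 <= n)%nat ->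
  C2 (gx g) -> C2 (gy g) -> gamma_eq g ->
  (forall x, g (x + / INR n) = Defs.Rn n (g x)) -> (forall x, g (- x) = Sref (g x)) ->
  (forall i, g (sym_lift n m A i) = Zs i) ->
  forall i x, g x = Zs i ->
    pdot (padd (unitv (psub (Zs (i - 1)%Z) (Zs i)))
               (unitv (psub (Zs (i + 1)%Z) (Zs i))))
         (dgamma g x) = 0.
Proof.
  intros hn [hx1 _] [hy1 _] hg hR hS hZ i x hxi.
  assert (hn0 : INR n <> 0) by (apply not_0_INR; lia).
  rewrite <- hZ in hxi. apply hg in hxi. destruct hxi as [z hz].
  set (N := (A + 2 * Z.of_nat m * i + 2 * z * Z.of_nat n)%Z).
  assert (h2x : 2 * x = IZR N / INR n).
  { unfold N. rewrite !plus_IZR, !mult_IZR, <- !INR_IZR_INZ.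
    unfold sym_lift in hz. replace x with (IZR z + (IZR A / (2 * INR n) + INR m / INR n * IZR i)) by lra.
    field. auto. }
  assert (hnz : Z.of_nat n <> 0%Z) by lia.
  pose proof (Z.div_mod N (Z.of_nat n) hnz) as dm.
  pose proof (Z.mod_pos_bound N (Z.of_nat n) ltac:(lia)) as mb.
  set (N' := Z.to_nat (N mod Z.of_nat n)).
  assert (hN' : INR N' = IZR (N mod Z.of_nat n)).
  { unfold N'. rewrite INR_IZR_INZ, Z2Nat.id by lia. reflexivity. }
  set (th := INR N' * (2 * PI / INR n)).
  assert (hL : forall y, g (2 * x - y) = Lr th (g y)).
  { intro y. unfold th. rewrite <- (refl_formula n g hn0 hR hS N' y).
    apply hg. exists (N / Z.of_nat n)%Z. rewrite h2x, hN'.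
    rewrite dm at 1. rewrite plus_IZR, mult_IZR, <- INR_IZR_INZ. field. auto. }
  assert (hip : Zs (i + 1)%Z = Lr th (Zs (i - 1)%Z)).
  { rewrite <- !hZ, <- hL. apply hg. exists (- 2 * z)%Z.
    rewrite mult_IZR. unfold sym_lift in *. rewrite plus_IZR, minus_IZR.
    replace x with (IZR z + (IZR A / (2 * INR n) + INR m / INR n * IZR i)) by lra.
    simpl. field. auto. }
  assert (hii : Zs i = Lr th (Zs i)).
  { rewrite <- !hZ, <- hL. apply hg. exists (- 2 * z)%Z.
    rewrite mult_IZR. simpl. lra. }
  set (c := cos th). set (s := sin th).
  set (t1 := Derive (gx g) x). set (t2 := Derive (gy g) x).
  assert (hfx : forall y, c * gx g y + s * gy g y = gx g (2 * x - y)).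
  { intro y. unfold gx. rewrite hL. unfold Lr. reflexivity. }
  assert (hfy : forall y, s * gx g y - c * gy g y = gy g (2 * x - y)).
  { intro y. unfold gy. rewrite hL. unfold Lr. reflexivity. }
  assert (e1 : c * t1 + s * t2 = - t1).
  { unfold t1, t2. rewrite <- (Derive_lin (gx g) (gy g) c s x hx1 hy1).
    transitivity (Derive (fun y => gx g (2 * x - y)) x).
    apply Derive_ext; exact hfx. apply Derive_refl; exact hx1. }
  assert (e2 : s * t1 - c * t2 = - t2).
  { unfold t1, t2. rewrite <- (Derive_lin2 (gx g) (gy g) s c x hx1 hy1).
    transitivity (Derive (fun y => gy g (2 * x - y)) x).
    apply Derive_ext; exact hfy. apply Derive_refl; exact hy1. }
  assert (hQ : psub (Zs (i + 1)%Z) (Zs i) =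
     (c * fst (psub (Zs (i - 1)%Z) (Zs i)) + s * snd (psub (Zs (i - 1)%Z) (Zs i)),
      s * fst (psub (Zs (i - 1)%Z) (Zs i)) - c * snd (psub (Zs (i - 1)%Z) (Zs i)))).
  { rewrite hip. revert hii. generalize (Zs i) (Zs (i - 1)%Z). intros [a0 b0] [a1 b1] h.
    unfold Lr in *. simpl in *. injection h as h1 h2. unfold psub; simpl. fold c s in h1, h2 |- *.
    f_equal; lra. }
  rewrite hQ. unfold dgamma. fold t1 t2.
  destruct (psub (Zs (i - 1)%Z) (Zs i)) as [a b]. simpl.
  apply alg_refl; auto. unfold c, s. rewrite Rplus_comm. rewrite <- !Rsqr_def. apply sin2_cos2.
Qed.

Lemma sym_good (n m : nat) (g : R -> pt) (A : Z) : (2 <= n)%nat -> (1 <= m <= n - 1)%nat ->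
  gamma_eq g ->
  is_lift g (fun i => g (sym_lift n m A i)) (sym_lift n m A) /\
  nm_seq g n m (fun i => g (sym_lift n m A i)) /\ Birkhoff g (fun i => g (sym_lift n m A i)).
Proof.
  intros hn hm hg.
  assert (hn0 : INR n <> 0) by (apply not_0_INR; lia).
  assert (hmn : 0 < INR m / INR n < 1).
  { assert (1 <= INR m) by (replace 1 with (INR 1) by reflexivity; apply le_INR; lia).
    assert (INR m < INR n) by (apply lt_INR; lia).
    split. apply Rdiv_lt_0_compat; lra.
    apply (Rmult_lt_reg_r (INR n)); [lra|]. unfold Rdiv. rewrite Rmult_assoc, Rinv_l; lra. }
  assert (hd : forall i, sym_lift n m A (i + 1)%Z - sym_lift n m A i = INR m / INR n).
  { intro i. unfold sym_lift. rewrite plus_IZR. ring. }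
  assert (hl : is_lift g (fun i => g (sym_lift n m A i)) (sym_lift n m A)).
  { intro i. split; [reflexivity|]. rewrite hd. exact hmn. }
  split; [exact hl|split; [split; [|split]|]].
  - split.
    + intro i. exists (sym_lift n m A i). reflexivity.
    + intros i h. apply hg in h. destruct h as [k hk].
      assert (e : sym_lift n m A i - sym_lift n m A (i + 1)%Z = 0).
      { apply isInt_small. exists k; exact hk. pose proof (hd i). lra. }
      pose proof (hd i). lra.
  - intro i. apply hg. exists (Z.of_nat m). unfold sym_lift. rewrite plus_IZR, <- !INR_IZR_INZ.
    field. auto.
  - exists (sym_lift n m A). split; [exact hl|].
    assert (L1 : is_lim_seq (fun k => / INR k) 0).
    { pose proof (is_lim_seq_inv _ _ is_lim_seq_INR) as h. simpl in h. apply h. discriminate. }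
    assert (L2 : is_lim_seq (fun k => IZR A / (2 * INR n) * / INR k + INR m / INR n)
                  (IZR A / (2 * INR n) * 0 + INR m / INR n)).
    { apply is_lim_seq_plus'. 2: apply is_lim_seq_const.
      pose proof (is_lim_seq_scal_l _ (IZR A / (2 * INR n)) _ L1) as h. simpl in h. exact h. }
    replace (INR m / INR n) with (IZR A / (2 * INR n) * 0 + INR m / INR n) by ring.
    apply (is_lim_seq_ext_loc _ _ _ ) with (2 := L2).
    exists 1%nat. intros k hk.
    assert (hk0 : INR k <> 0) by (apply not_0_INR; lia).
    unfold sym_lift. rewrite <- INR_IZR_INZ. field. split; auto.
  - exists (sym_lift n m A). split; [exact hl|].
    intros i j m' l h. unfold sym_lift in *. rewrite !plus_IZR. lra.
Qed.

Theorem mainTheorem15 (n m : nat) (g : R -> pt) :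
  Nat.gcd m n = 1%nat ->
  (1 <= m <= n - 1)%nat ->
  Dn_billiard_curve n g ->
  (forall Zs, nm_seq g n m Zs ->
     (Dn_symmetric n Zs <-> exists A : Z, is_lift g Zs (sym_lift n m A))) /\
  (forall Zs, nm_seq g n m Zs -> Dn_symmetric n Zs -> billiard_orbit g Zs) /\
  (forall Zs Zs' (A A' : Z),
     nm_seq g n m Zs -> Dn_symmetric n Zs -> billiard_orbit g Zs ->
     nm_seq g n m Zs' -> Dn_symmetric n Zs' -> billiard_orbit g Zs' ->
     is_lift g Zs (sym_lift n m A) -> is_lift g Zs' (sym_lift n m A') ->
     (geom_equal Zs Zs' <->
      exists k : Z, forall i, sym_lift n m A i - sym_lift n m A' i = IZR k / INR n)) /\
  (exists Z1 Z2 : Z -> pt,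
     (nm_seq g n m Z1 /\ Dn_symmetric n Z1 /\ Birkhoff g Z1 /\ billiard_orbit g Z1) /\
     (nm_seq g n m Z2 /\ Dn_symmetric n Z2 /\ Birkhoff g Z2 /\ billiard_orbit g Z2) /\
     ~ geom_equal Z1 Z2 /\
     forall Zs, nm_seq g n m Zs -> Dn_symmetric n Zs -> Birkhoff g Zs ->
       billiard_orbit g Zs -> geom_equal Zs Z1 \/ geom_equal Zs Z2).
Proof.
  intros hgcd hm [hcx [hcy [_ [hg [_ [hR hS]]]]]].
  assert (hn : (2 <= n)%nat) by lia.
  assert (hn0 : INR n <> 0) by (apply not_0_INR; lia).
  assert (hm1 : (1 <= m)%nat) by lia.
  assert (hn1 : (1 <= n)%nat) by lia.
  assert (FW : forall Zs, nm_seq g n m Zs -> Dn_symmetric n Zs ->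
             exists A : Z, is_lift g Zs (sym_lift n m A)).
  { intros Zs [_ [hp hrot]] hsym. apply (forward n m g Zs); auto. }
  assert (ORB : forall Zs A, (forall i, g (sym_lift n m A i) = Zs i) -> billiard_seq g Zs ->
             billiard_orbit g Zs).
  { intros Zs A hZ hbs. split; auto. apply (reflect n m g Zs A); auto. }
  split; [|split; [|split]].
  - intros Zs hnm. split.
    + apply FW; auto.
    + intros [A hA]. apply (backward n m g Zs A); auto. intro i; apply (hA i).
  - intros Zs hnm hsym. destruct (FW Zs hnm hsym) as [A hA].
    apply (ORB Zs A); [intro i; apply (hA i)|apply hnm].
  - intros Zs Zs' A A' _ _ _ _ _ _ hA hA'. apply (geom_iff n m g); auto.
    intro i; apply (hA i). intro i; apply (hA' i).
  - destruct (sym_good n m g 0%Z hn hm hg) as [hl1 [hnm1 hb1]].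
    destruct (sym_good n m g 1%Z hn hm hg) as [hl2 [hnm2 hb2]].
    exists (fun i => g (sym_lift n m 0 i)), (fun i => g (sym_lift n m 1 i)).
    split; [|split; [|split]].
    + split; [exact hnm1|split; [|split; [exact hb1|]]].
      * apply (backward n m g _ 0%Z); auto.
      * apply (ORB _ 0%Z); [intro; reflexivity|apply hnm1].
    + split; [exact hnm2|split; [|split; [exact hb2|]]].
      * apply (backward n m g _ 1%Z); auto.
      * apply (ORB _ 1%Z); [intro; reflexivity|apply hnm2].
    + intro H. apply (geom_iff n m g _ _ 0%Z 1%Z) in H; auto.
      destruct H as [K HK]. specialize (HK 0%Z). rewrite sym_diff in HK by auto.
      assert (IZR (-1) = IZR (2 * K)).
      { rewrite mult_IZR. apply (Rmult_eq_reg_r (/ (2 * INR n))).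
        2: { apply Rinv_neq_0_compat. lra. }
        replace (IZR (-1) * / (2 * INR n)) with ((IZR 0 - IZR 1) / (2 * INR n)) by (simpl; field; auto).
        rewrite HK. field. auto. }
      apply eq_IZR in H. lia.
    + intros Zs hnm hsym _ _. destruct (FW Zs hnm hsym) as [A hA].
      assert (hZ : forall i, g (sym_lift n m A i) = Zs i) by (intro i; apply (hA i)).
      destruct (Z.Even_or_Odd A) as [[t ht]|[t ht]].
      * left. apply (geom_iff n m g _ _ A 0%Z); auto.
        exists t. intro i. rewrite sym_diff by auto. rewrite ht, mult_IZR. simpl. field. auto.
      * right. apply (geom_iff n m g _ _ A 1%Z); auto.
        exists t. intro i. rewrite sym_diff by auto. rewrite ht, plus_IZR, mult_IZR. simpl. field. auto.
Qed.
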